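(* Let $|\Psi^{\mathrm h}_0\rangle$ and $|\Psi^{\mathrm c}_0\rangle$ be two initial states with $p^{\mathrm h}_0(0)>0$ and $p^{\mathrm c}_0(0)>0$, and suppose $|\Psi^{\mathrm h}_0\rangle$ is hotter than $|\Psi^{\mathrm c}_0\rangle$ with respect to $D_f$, i.e. $D_f^{\mathrm h}(0)>D_f^{\mathrm c}(0)$. Let $i\in\{1,\dots,n-1\}$ be the smallest index such that $\frac{p^{\mathrm h}_i(0)}{p^{\mathrm h}_0(0)}\neq\frac{p^{\mathrm c}_i(0)}{p^{\mathrm c}_0(0)}$ (such an index exists under the hypotheses). Then the Mpemba effect occurs for this pair (with respect to $D_f$) if and only if $$\frac{p^{\mathrm h}_i(0)}{p^{\mathrm h}_0(0)}<\frac{p^{\mathrm c}_i(0)}{p^{\mathrm c}_0(0)}.$$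
   Context: Let $H$ be a Hamiltonian on an $n$-dimensional Hilbert space with nondegenerate eigenvalues $0=E_0<E_1<\dots<E_{n-1}$ and orthonormal eigenvectors $|E_0\rangle,\dots,|E_{n-1}\rangle$. For a pure initial state $|\Psi_0\rangle$ and real $\tau$, quantum imaginary-time evolution (QITE) is $|\Psi(\tau)\rangle=e^{-H\tau}|\Psi_0\rangle/\sqrt{\langle\Psi_0|e^{-2H\tau}|\Psi_0\rangle}$. The populations are $p_i(\tau)=|\langle E_i|\Psi(\tau)\rangle|^2$, so that $p_i(\tau)=p_i(0)e^{-2E_i\tau}/\sum_{j=0}^{n-1}p_j(0)e^{-2E_j\tau}$. Fix a nondecreasing function $f:\mathbb R\to\mathbb R$ with $f(E_1)>f(E_0)=0$, and define the distance to the ground state $D_f(\tau)=\sum_{i=0}^{n-1}p_i(\tau)f(E_i)$. Superscripts $\mathrm h$ and $\mathrm c$ denote quantities for the QITE trajectories starting from $|\Psi^{\mathrm h}_0\rangle$ and $|\Psi^{\mathrm c}_0\rangle$ respectively. Given $D_f^{\mathrm h}(0)>D_f^{\mathrm c}(0)$, the Mpemba effect occurs if there exists $\tau^\star>0$ such that $D_f^{\mathrm h}(\tau)<D_f^{\mathrm c}(\tau)$ for all $\tau>\tau^\star$. *)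

(* Defs.v *)
From mathcomp Require Import all_boot all_algebra.
From mathcomp Require Import complex.
From mathcomp Require Import all_classical all_reals all_analysis.
Set Implicit Arguments. Unset Strict Implicit. Unset Printing Implicit Defensive.
Import GRing.Theory Num.Theory.
Local Open Scope ring_scope.
Local Open Scope complex_scope.

(* The Hilbert space C^n is written in the orthonormal eigenbasis
   |E_0>, ..., |E_{n-1}> of H: a vector is given by its coordinates
   psi i = <E_i|psi> for i < n (values at i >= n are irrelevant). *)

Definition abs2 {R : realType} (z : R[i]) : R := (complex.Re z) ^+ 2 + (complex.Im z) ^+ 2.

Definition sqnorm {R : realType} (n : nat) (psi : nat -> R[i]) : R :=
  \sum_(j < n) abs2 (psi j).

Definition is_state {R : realType} (n : nat) (psi : nat -> R[i]) : Prop :=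
  sqnorm n psi = 1.

(* e^{-H tau} |psi>, in eigenbasis coordinates *)
Definition evol {R : realType} (E : nat -> R) (tau : R) (psi : nat -> R[i])
  : nat -> R[i] := fun i => (expR (- (E i * tau)))%:C * psi i.

(* QITE state |Psi(tau)> = e^{-H tau}|Psi_0> / sqrt(<Psi_0|e^{-2H tau}|Psi_0>) *)
Definition qite {R : realType} (n : nat) (E : nat -> R) (psi : nat -> R[i])
  (tau : R) : nat -> R[i] :=
  fun i => (Num.sqrt (\sum_(j < n) expR (- (2 * E j * tau)) * abs2 (psi j)))^-1%:C
           * evol E tau psi i.

Definition pop {R : realType} (n : nat) (E : nat -> R) (psi : nat -> R[i])
  (tau : R) (i : nat) : R := abs2 (qite n E psi tau i).

Definition Dist {R : realType} (n : nat) (E : nat -> R) (f : R -> R)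
  (psi : nat -> R[i]) (tau : R) : R :=
  \sum_(i < n) pop n E psi tau i * f (E i).

Definition mpemba {R : realType} (n : nat) (E : nat -> R) (f : R -> R)
  (psih psic : nat -> R[i]) : Prop :=
  exists tstar : R, 0 < tstar /\
    forall tau : R, tstar < tau -> Dist n E f psih tau < Dist n E f psic tau.

(* Main.v *)
Require Import Defs.
From mathcomp Require Import all_boot all_algebra.
From mathcomp Require Import complex.
From mathcomp Require Import all_classical all_reals all_analysis.
From mathcomp Require Import ring lra.
Import GRing.Theory Num.Theory.
Local Open Scope ring_scope.

Module Helpers.
Import order.Order.TTheory.
Import numFieldNormedType.Exports.
Local Open Scope classical_set_scope.
Section Aux.
Context {R : realType}.

Definition ifz (d c : R) : R := if d == 0 then c else 0.

Lemma scale_pinfty (d : R) : 0 < d -> (d * t) @[t --> +oo] --> +oo.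
Proof.
move=> d0 P [M [Mr HM]]; exists (M / d); split; first by rewrite realE; apply/orP; case: (lerP 0 (M/d)) => h; [left|right; apply: ltW].
move=> t Ht; apply: HM; by rewrite -ltr_pdivrMl // mulrC.
Qed.

Lemma term_cvg (c d : R) : 0 <= d ->
  (c * expR (- (d * t))) @[t --> +oo] --> ifz d c.
Proof.
rewrite /ifz le_eqVlt => /orP[/eqP<-|d0].
  rewrite eqxx; under eq_cvg do rewrite mul0r oppr0 expR0 mulr1. exact: cvg_cst.
rewrite gt_eqF //.
have -> : 0 = c * 0 :> R by rewrite mulr0.
apply: cvgMr.
exact: (cvg_comp _ _ (@scale_pinfty d d0) (@cvgr_expR R)).
Qed.

Definition Wsum (m p : nat) (c d : nat -> R) (t : R) :=
  \sum_(m <= j < p) c j * expR (- (d j * t)).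

Lemma Wsum_cvg m p c d : (forall j, (m <= j < p)%N -> 0 <= d j) ->
  (Wsum m p c d t) @[t --> +oo] --> \sum_(m <= j < p) ifz (d j) (c j).
Proof.
move=> hd; rewrite /Wsum.
under eq_cvg do rewrite big_nat_cond.
rewrite big_nat_cond.
apply: (@cvg_big _ _ +%R 0 (fun j => (m <= j < p)%N && true) add_continuous).
  by move=> j; rewrite andbT => /hd; exact: term_cvg.
Qed.
End Aux.
Arguments Wsum {R}. Arguments ifz {R}. Arguments Wsum_cvg {R}. Arguments term_cvg {R}.
Section Alg.
Context {R : realType}.
Local Open Scope complex_scope.

Lemma abs2_scale (x : R) (z : R[i]) : abs2 (x%:C * z) = x ^+ 2 * abs2 z.
Proof. case: z => u v; rewrite /abs2 /=; ring. Qed.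

Lemma abs2_ge0 (z : R[i]) : 0 <= abs2 z.
Proof. by rewrite /abs2 addr_ge0 // sqr_ge0. Qed.

Definition Ssum n (E : nat -> R) (psi : nat -> R[i]) t :=
  \sum_(k < n) expR (- (2 * E k * t)) * abs2 (psi k).
Definition Asum n (E : nat -> R) f (psi : nat -> R[i]) t :=
  \sum_(k < n) expR (- (2 * E k * t)) * abs2 (psi k) * f (E k).

Lemma Ssum_ge0 n (E : nat -> R) (psi : nat -> R[i]) t : 0 <= Ssum n E psi t.
Proof. by apply: sumr_ge0 => k _; rewrite mulr_ge0 // ?abs2_ge0 // ltW // expR_gt0. Qed.

Lemma pop_eq n (E : nat -> R) (psi : nat -> R[i]) t j :
  pop n E psi t j = expR (- (2 * E j * t)) * abs2 (psi j) / Ssum n E psi t.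
Proof.
rewrite /pop /qite /evol abs2_scale abs2_scale exprVn sqr_sqrtr; last exact: Ssum_ge0.
rewrite -(@expRM_natl R 2) mulrN (mulrA (2:R)) /Ssum; ring.
Qed.

Lemma Dist_eq n (E : nat -> R) f (psi : nat -> R[i]) t :
  Dist n E f psi t = Asum n E f psi t / Ssum n E psi t.
Proof.
rewrite /Dist /Asum mulr_suml; apply: eq_bigr => k _.
by rewrite pop_eq mulrAC.
Qed.

Lemma pop0_eq n (E : nat -> R) (psi : nat -> R[i]) j : pop n E psi 0 j = abs2 (psi j) / Ssum n E psi 0.
Proof. by rewrite pop_eq mulr0 oppr0 expR0 mul1r. Qed.

Lemma a0_pos n (E : nat -> R) (psi : nat -> R[i]) : 0 < pop n E psi 0 0%N -> 0 < abs2 (psi 0%N) /\ 0 < Ssum n E psi 0.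
Proof.
rewrite pop0_eq => h.
have S0 : Ssum n E psi 0 != 0.
  by apply/eqP => e; move: h; rewrite e invr0 mulr0 ltxx.
have Sp : 0 < Ssum n E psi 0 by rewrite lt_def S0 Ssum_ge0.
split=> //.
by move: h; rewrite pmulr_lgt0 // invr_gt0.
Qed.

Lemma ratio_eq n (E : nat -> R) (psi : nat -> R[i]) j : 0 < pop n E psi 0 0%N ->
  pop n E psi 0 j / pop n E psi 0 0%N = abs2 (psi j) / abs2 (psi 0%N).
Proof.
move=> /a0_pos [a0 S0]; rewrite !pop0_eq.
rewrite invfM invrK mulrA mulrAC -mulrA mulrA divfK //; exact: lt0r_neq0.
Qed.

Lemma Ssum_pos n (E : nat -> R) (psi : nat -> R[i]) t : (0 < n)%N -> 0 < abs2 (psi 0%N) -> 0 < Ssum n E psi t.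
Proof.
move=> n0 a0; rewrite /Ssum (bigD1 (Ordinal n0)) //=.
rewrite ltr_wpDr //; last by rewrite mulr_gt0 // expR_gt0.
by apply: sumr_ge0 => k _; rewrite mulr_ge0 // ?abs2_ge0 // ltW // expR_gt0.
Qed.

Lemma div_lt (x y u v : R) : 0 < x -> 0 < y -> (u / x < v / y) = (u * y < v * x).
Proof. by move=> x0 y0; rewrite ltr_pdivrMr // mulrAC ltr_pdivlMr. Qed.

End Alg.
Arguments Ssum {R}. Arguments Asum {R}.
Section Dec.
Context {R : realType}.
Local Open Scope complex_scope.

Lemma ord_to_nat n (F : nat -> R) : \sum_(k < n) F k = \sum_(0 <= k < n) F k.
Proof. by rewrite big_mkord. Qed.

Lemma split_S n i (E : nat -> R) (psi : nat -> R[i]) (r : nat -> R) t : (i <= n)%N ->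
  (forall j, (j < i)%N -> abs2 (psi j) = abs2 (psi 0%N) * r j) ->
  Ssum n E psi t = abs2 (psi 0%N) * Wsum 0 i r (fun j => 2 * E j) t
                   + Wsum i n (fun j => abs2 (psi j)) (fun j => 2 * E j) t.
Proof.
move=> hin h; rewrite /Ssum (ord_to_nat n (fun k => expR (- (2 * E k * t)) * abs2 (psi k))) (big_cat_nat (leq0n i) hin) /Wsum mulr_sumr.
congr (_ + _); apply: eq_big_nat => j /andP[_ hj]; last by rewrite mulrC.
by rewrite h //; ring.
Qed.

Lemma split_A n i (E : nat -> R) f (psi : nat -> R[i]) (r : nat -> R) t : (i <= n)%N ->
  (forall j, (j < i)%N -> abs2 (psi j) = abs2 (psi 0%N) * r j) ->
  Asum n E f psi t = abs2 (psi 0%N) * Wsum 0 i (fun j => r j * f (E j)) (fun j => 2 * E j) t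
                   + Wsum i n (fun j => abs2 (psi j) * f (E j)) (fun j => 2 * E j) t.
Proof.
move=> hin h; rewrite /Asum (ord_to_nat n (fun k => expR (- (2 * E k * t)) * abs2 (psi k) * f (E k))) (big_cat_nat (leq0n i) hin) /Wsum mulr_sumr.
congr (_ + _); apply: eq_big_nat => j /andP[_ hj]; last by ring.
by rewrite h //; ring.
Qed.

Lemma gW i n (E : nat -> R) c t :
  expR (2 * E i * t) * Wsum i n c (fun j => 2 * E j) t
  = Wsum i n c (fun j => 2 * E j - 2 * E i) t.
Proof.
rewrite /Wsum mulr_sumr; apply: eq_bigr => j _.
rewrite mulrCA -expRD; congr (_ * expR _); ring.
Qed.

Lemma sum_ifz_one m p k (c d : nat -> R) : (m <= k < p)%N ->
  (forall j, (m <= j < p)%N -> (d j == 0) = (j == k)) ->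
  \sum_(m <= j < p) ifz (d j) (c j) = c k.
Proof.
move=> hk hd.
rewrite (eq_big_nat _ _ (F2 := fun j => if j == k then c j else 0)); last first.
  by move=> j hj; rewrite /ifz hd.
by rewrite -big_mkcond big_nat1_eq hk.
Qed.

Lemma sum_ifz_zero m p (c d : nat -> R) :
  (forall j, (m <= j < p)%N -> d j != 0) ->
  \sum_(m <= j < p) ifz (d j) (c j) = 0.
Proof.
move=> hd; rewrite big_nat_cond big1 // => j /andP[/hd h _].
by rewrite /ifz (negbTE h).
Qed.

End Dec.

Lemma theorem1_aux (R : realType) (n : nat) (E : nat -> R) (f : R -> R)
  (psih psic : nat -> R[i])
  (Hn : (2 <= n)%N)
  (HE0 : E 0%N = 0)
  (HEinc : forall j k : nat, (j < k)%N -> (k < n)%N -> E j < E k)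
  (Hfmono : forall x y : R, x <= y -> f x <= f y)
  (Hf0 : f (E 0%N) = 0)
  (Hf1 : f (E 0%N) < f (E 1%N))
  (Hh : is_state n psih) (Hc : is_state n psic)
  (Hh0 : 0 < pop n E psih 0 0%N) (Hc0 : 0 < pop n E psic 0 0%N)
  (Hhot : Dist n E f psic 0 < Dist n E f psih 0)
  (i : nat) (Hi1 : (1 <= i)%N) (Hin : (i < n)%N)
  (Hneq : pop n E psih 0 i / pop n E psih 0 0%N
          <> pop n E psic 0 i / pop n E psic 0 0%N)
  (Hmin : forall j : nat, (1 <= j)%N -> (j < i)%N ->
          pop n E psih 0 j / pop n E psih 0 0%N
          = pop n E psic 0 j / pop n E psic 0 0%N) :
  mpemba n E f psih psic <->
  pop n E psih 0 i / pop n E psih 0 0%N < pop n E psic 0 i / pop n E psic 0 0%N.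
Proof.
have n0 : (0 < n)%N by apply: leq_trans Hn.
have Hin' : (i <= n)%N := ltnW Hin.
have Hmin' : forall j, (1 <= j)%N -> (j < i)%N ->
    abs2 (psih j) / abs2 (psih 0%N) = abs2 (psic j) / abs2 (psic 0%N).
  by move=> j h1 h2; have := Hmin j h1 h2; rewrite (@ratio_eq _ _ _ _ j Hh0) (@ratio_eq _ _ _ _ j Hc0).
have Hneq2 : abs2 (psih i) / abs2 (psih 0%N) <> abs2 (psic i) / abs2 (psic 0%N).
  by move=> e; apply: Hneq; rewrite (@ratio_eq _ _ _ _ i Hh0) (@ratio_eq _ _ _ _ i Hc0).
rewrite (@ratio_eq _ _ _ _ i Hh0) (@ratio_eq _ _ _ _ i Hc0).
have [a0p _] := a0_pos _ _ _ Hh0.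
have [b0p _] := a0_pos _ _ _ Hc0.
have a0n : abs2 (psih 0%N) != 0 by exact: lt0r_neq0.
have b0n : abs2 (psic 0%N) != 0 by exact: lt0r_neq0.
pose r j := abs2 (psih j) / abs2 (psih 0%N).
have Hra : forall j, (j < i)%N -> abs2 (psih j) = abs2 (psih 0%N) * r j.
  by move=> j _; rewrite /r mulrC divfK.
have Hrb : forall j, (j < i)%N -> abs2 (psic j) = abs2 (psic 0%N) * r j.
  move=> j hj; rewrite /r; case: j hj => [|j] hj.
    by rewrite !divff // mulr1.
  by rewrite Hmin' // mulrC divfK.
pose D j := 2 * E j.
pose D' j := 2 * E j - 2 * E i.
pose P := Wsum 0 i r D.
pose Q := Wsum 0 i (fun j => r j * f (E j)) D.
pose X (psi : nat -> R[i]) := Wsum i n (fun j => abs2 (psi j) * f (E j)) D.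
pose Y (psi : nat -> R[i]) := Wsum i n (fun j => abs2 (psi j)) D.
pose gX (psi : nat -> R[i]) := Wsum i n (fun j => abs2 (psi j) * f (E j)) D'.
pose gY (psi : nat -> R[i]) := Wsum i n (fun j => abs2 (psi j)) D'.
pose G t := expR (2 * E i * t) * (Asum n E f psih t * Ssum n E psic t
                                  - Asum n E f psic t * Ssum n E psih t).
have key : forall t, G t =
   abs2 (psih 0%N) * (Q t * gY psic t - P t * gX psic t)
 + abs2 (psic 0%N) * (gX psih t * P t - gY psih t * Q t)
 + X psih t * gY psic t - gY psih t * X psic t.
  move=> t; rewrite /G (split_S _ _ _ _ _ t Hin' Hra) (split_S _ _ _ _ _ t Hin' Hrb).
  rewrite (split_A _ _ _ _ _ _ t Hin' Hra) (split_A _ _ _ _ _ _ t Hin' Hrb).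
  rewrite /gX /gY -!gW /P /Q /X /Y /D; ring.

have Epos : forall j, (0 < j)%N -> (j < n)%N -> 0 < E j.
  by move=> j h1 h2; rewrite -HE0; exact: HEinc.
have Dpos : forall j, (0 < j)%N -> (j < n)%N -> 0 < D j.
  by move=> j h1 h2; have := Epos j h1 h2; rewrite /D => h; lra.
have Dge0 : forall j, (j < n)%N -> 0 <= D j.
  move=> j; case: j => [|j] h; first by rewrite /D HE0 mulr0 lexx.
  by apply: ltW; apply: Dpos.
have hD0 : forall j, (0 <= j < i)%N -> (D j == 0) = (j == 0%N).
  move=> j /andP[_ hj]; case: j hj => [|j] hj; first by rewrite /D /= HE0 mulr0 !eqxx.
  have -> : (j.+1 == 0%N) = false by [].
  apply/negbTE; apply: lt0r_neq0; apply: Dpos => //; exact: ltn_trans hj Hin.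
have hDne : forall j, (i <= j < n)%N -> D j != 0.
  move=> j /andP[h1 h2]; apply: lt0r_neq0; apply: Dpos => //; exact: leq_trans Hi1 h1.
have hD' : forall j, (i <= j < n)%N -> (D' j == 0) = (j == i).
  move=> j /andP[h1 h2]; have [->|hji] := eqVneq j i; first by rewrite /D' subrr eqxx.
  have hij : (i < j)%N by rewrite ltn_neqAle eq_sym hji h1.
  have := HEinc i j hij h2 => h.
  apply/negbTE; apply: lt0r_neq0; rewrite /D'; lra.
have hD'ge : forall j, (i <= j < n)%N -> 0 <= D' j.
  move=> j /andP[h1 h2]; have [->|hji] := eqVneq j i; first by rewrite /D' subrr lexx.
  have hij : (i < j)%N by rewrite ltn_neqAle eq_sym hji h1.
  have := HEinc i j hij h2 => h; rewrite /D'; lra.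
have hDge_lo : forall j, (0 <= j < i)%N -> 0 <= D j.
  by move=> j /andP[_ hj]; apply: Dge0; exact: ltn_trans hj Hin.
have hDge_hi : forall j, (i <= j < n)%N -> 0 <= D j.
  by move=> j /andP[_ hj]; apply: Dge0.
have i0 : (0 <= 0 < i)%N by rewrite leqnn.
have ii : (i <= i < n)%N by rewrite leqnn Hin.
have hP : P t @[t --> +oo] --> (1:R).
  have := Wsum_cvg 0 i r D hDge_lo.
  by rewrite (sum_ifz_one 0 i 0 r D i0 hD0) /r divff.
have hQ : Q t @[t --> +oo] --> (0:R).
  have := Wsum_cvg 0 i (fun j => r j * f (E j)) D hDge_lo.
  by rewrite (sum_ifz_one 0 i 0 _ D i0 hD0) HE0 -{1}HE0 Hf0 mulr0.
have hX : forall psi : nat -> R[i], X psi t @[t --> +oo] --> (0:R).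
  move=> psi; have := Wsum_cvg i n (fun j => abs2 (psi j) * f (E j)) D hDge_hi.
  by rewrite (sum_ifz_zero i n _ D hDne).
have hgX : forall psi : nat -> R[i], gX psi t @[t --> +oo] --> abs2 (psi i) * f (E i).
  move=> psi; have := Wsum_cvg i n (fun j => abs2 (psi j) * f (E j)) D' hD'ge.
  by rewrite (sum_ifz_one i n i _ D' ii hD').
have hgY : forall psi : nat -> R[i], gY psi t @[t --> +oo] --> abs2 (psi i).
  move=> psi; have := Wsum_cvg i n (fun j => abs2 (psi j)) D' hD'ge.
  by rewrite (sum_ifz_one i n i _ D' ii hD').
pose L := abs2 (psih 0%N) * (0 * abs2 (psic i) - 1 * (abs2 (psic i) * f (E i)))
 + abs2 (psic 0%N) * (abs2 (psih i) * f (E i) * 1 - abs2 (psih i) * 0)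
 + 0 * abs2 (psic i) - abs2 (psih i) * 0.
have Hlim : G t @[t --> +oo] --> L.
  under eq_cvg do rewrite key.
  exact: (cvgB (cvgD (cvgD (cvgM (cvg_cst _) (cvgB (cvgM hQ (hgY psic)) (cvgM hP (hgX psic))))
     (cvgM (cvg_cst _) (cvgB (cvgM (hgX psih) hP) (cvgM (hgY psih) hQ)))) (cvgM (hX psih) (hgY psic)))
     (cvgM (hgY psih) (hX psic))).
have HL : L = f (E i) * (abs2 (psih i) * abs2 (psic 0%N) - abs2 (psic i) * abs2 (psih 0%N)).
  rewrite /L; ring.
have fi : 0 < f (E i).
  have E1i : E 1%N <= E i.
    move: Hi1; rewrite leq_eqVlt => /orP[/eqP <-|h]; first exact: lexx.
    exact: ltW (HEinc _ _ h Hin).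
  have := Hfmono _ _ E1i; rewrite Hf0 in Hf1 => h; lra.
have HG : forall t, (Dist n E f psih t < Dist n E f psic t) = (G t < 0).
  move=> t; rewrite !Dist_eq div_lt ?Ssum_pos // /G pmulr_rlt0 ?expR_gt0 //.
  by rewrite subr_lt0.
split.
- move=> [ts [ts0 Hts]].
  case: (ltgtP (abs2 (psih i) / abs2 (psih 0%N)) (abs2 (psic i) / abs2 (psic 0%N))) => // hgt.
  rewrite div_lt // in hgt.
  have Lpos : 0 < L by rewrite HL; apply: mulr_gt0 => //; rewrite subr_gt0.
  have [M [_ HM]] := cvgr_gt L Hlim 0 Lpos.
  pose t := `|M| + `|ts| + 1.
  have h1 := ler_norm M. have h2 := ler_norm ts. have h3 := normr_ge0 M. have h4 := normr_ge0 ts.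
  have hMt : M < t by rewrite /t; lra.
  have htst : ts < t by rewrite /t; lra.
  have := HM t hMt; have := Hts t htst; rewrite HG => ha hb; lra.
- move=> hlt; rewrite div_lt // in hlt.
  have Lneg : L < 0 by rewrite HL pmulr_rlt0 // subr_lt0.
  have [M [_ HM]] := cvgr_lt L Hlim 0 Lneg.
  have h1 := ler_norm M. have h3 := normr_ge0 M.
  exists (`|M| + 1); split; first lra.
  move=> t ht; rewrite HG; apply: HM; lra.
Qed.

End Helpers.

Theorem theorem1 (R : realType) (n : nat) (E : nat -> R) (f : R -> R)
  (psih psic : nat -> R[i])
  (Hn : (2 <= n)%N)
  (HE0 : E 0%N = 0)
  (HEinc : forall j k : nat, (j < k)%N -> (k < n)%N -> E j < E k)
  (Hfmono : forall x y : R, x <= y -> f x <= f y)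
  (Hf0 : f (E 0%N) = 0)
  (Hf1 : f (E 0%N) < f (E 1%N))
  (Hh : is_state n psih) (Hc : is_state n psic)
  (Hh0 : 0 < pop n E psih 0 0%N) (Hc0 : 0 < pop n E psic 0 0%N)
  (Hhot : Dist n E f psic 0 < Dist n E f psih 0)
  (i : nat) (Hi1 : (1 <= i)%N) (Hin : (i < n)%N)
  (Hneq : pop n E psih 0 i / pop n E psih 0 0%N
          <> pop n E psic 0 i / pop n E psic 0 0%N)
  (Hmin : forall j : nat, (1 <= j)%N -> (j < i)%N ->
          pop n E psih 0 j / pop n E psih 0 0%N
          = pop n E psic 0 j / pop n E psic 0 0%N) :
  mpemba n E f psih psic <->
  pop n E psih 0 i / pop n E psih 0 0%N < pop n E psic 0 i / pop n E psic 0 0%N.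
Proof.
exact (@Helpers.theorem1_aux R n E f psih psic Hn HE0 HEinc Hfmono Hf0 Hf1 Hh Hc Hh0 Hc0 Hhot i Hi1 Hin Hneq Hmin).
Qed.
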